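(* Let $S$ be a nonempty set of primes and $(a_n(q))_{n\ge1}$ a sequence in $\mathbb{Z}[q]$. Then $a_{p^rm}(q)\equiv a_{p^{r-1}m}(q^p)\pmod{[p^r]_{q^m}}$ holds for all primes $p\in S$ and all integers $m,r\ge1$ with $p\nmid m$ if and only if $\sum_{d\mid n}\mu(d)\,a_{nm/d}(q^d)\equiv0\pmod{[n]_{q^m}}$ for all integers $n\ge1$ divisible only by primes from $S$ and all integers $m\ge1$ coprime to $n$.
   Context: $\mu$ is the Möbius function and $[n]_{q^m}=1+q^m+q^{2m}+\dots+q^{m(n-1)}$; polynomial congruences modulo such polynomials mean divisibility of the difference in $\mathbb{Z}[q]$. *)

(* Defs.v *)
From HB Require Import structures.
From mathcomp Require Import all_boot all_order all_algebra.
Set Implicit Arguments. Unset Strict Implicit. Unset Printing Implicit Defensive.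
Import Order.TTheory GRing.Theory Num.Theory.
Local Open Scope ring_scope.

(* Möbius function: (-1)^k if n is a product of k distinct primes, 0 if n has
   a square factor; mobius 0 = 0 by convention (never used). *)
Definition mobius (n : nat) : int :=
  if n == 0%N then 0
  else if all (fun p => logn p n == 1%N) (primes n)
       then (-1) ^+ size (primes n) else 0.

(* q-integer [n]_{q^m} = 1 + q^m + ... + q^{m(n-1)} in Z[q]. *)
Definition qint (n m : nat) : {poly int} := \sum_(i < n) 'X^(m * i).

Definition zpdvd (g f : {poly int}) : Prop := exists c : {poly int}, f = c * g.

Definition subsq (f : {poly int}) (d : nat) : {poly int} := f \Po 'X^d.

(* Main.v *)
Require Import Defs.
From HB Require Import structures.
From mathcomp Require Import all_boot all_order all_algebra all_field.
From mathcomp Require Import zify.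
Set Implicit Arguments. Unset Strict Implicit. Unset Printing Implicit Defensive.
Import Order.TTheory GRing.Theory Num.Theory.
Local Open Scope ring_scope.
Definition ev (z : algC) (f : {poly int}) : algC := (map_poly intr f).[z].

Lemma evD z f g : ev z (f + g) = ev z f + ev z g.
Proof. by rewrite /ev rmorphD hornerD. Qed.
Lemma evN z f : ev z (- f) = - ev z f.
Proof. by rewrite /ev rmorphN hornerN. Qed.
Lemma evB z f g : ev z (f - g) = ev z f - ev z g.
Proof. by rewrite evD evN. Qed.
Lemma evM z f g : ev z (f * g) = ev z f * ev z g.
Proof. by rewrite /ev rmorphM hornerM. Qed.
Lemma evC z c : ev z c%:P = c%:~R.
Proof. by rewrite /ev map_polyC hornerC. Qed.
Lemma ev_sum z (I : Type) (r : seq I) (P : pred I) (F : I -> {poly int}) :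
  ev z (\sum_(i <- r | P i) F i) = \sum_(i <- r | P i) ev z (F i).
Proof. by rewrite /ev rmorph_sum horner_sum. Qed.
Lemma ev_subsq z f d : ev z (subsq f d) = ev (z ^+ d) f.
Proof. by rewrite /ev /subsq map_comp_poly map_polyXn horner_comp hornerXn. Qed.

Lemma qint_mul n m : qint n m * ('X^m - 1) = 'X^(n * m) - 1.
Proof.
rewrite mulrC /qint.
have := subrX1 ('X^m : {poly int}) n.
rewrite -exprM mulnC => ->; congr (_ * _); apply: eq_bigr => i _.
by rewrite -exprM.
Qed.

Lemma qint_monic n m : (0 < n)%N -> (0 < m)%N -> qint n m \is monic.
Proof.
move=> n0 m0.
have := qint_mul n m; move=> /(congr1 (fun p => p \is monic)).
have nm0 : (0 < n * m)%N by rewrite muln_gt0 n0.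
by rewrite monicMr ?monicXnsubC // monicXnsubC // => <-.
Qed.

Lemma ev_qint z n m : z ^+ (n * m) = 1 -> z ^+ m != 1 -> ev z (qint n m) = 0.
Proof.
move=> h1 h2.
have := congr1 (ev z) (qint_mul n m).
rewrite evM evB evB /ev !map_polyXn rmorph1 !hornerXn hornerC h1 subrr.
move/eqP; rewrite mulf_eq0 subr_eq0 (negbTE h2) orbF.
by move/eqP.
Qed.

Lemma zpdvd_ev n m f z : zpdvd (qint n m) f ->
  z ^+ (n * m) = 1 -> z ^+ m != 1 -> ev z f = 0.
Proof. by move=> [c ->] h1 h2; rewrite evM ev_qint // mulr0. Qed.

Lemma ev_zpdvd n m f : (0 < n)%N -> (0 < m)%N ->
  (forall z, z ^+ (n * m) = 1 -> z ^+ m != 1 -> ev z f = 0) ->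
  zpdvd (qint n m) f.
Proof.
move=> n0 m0 hz.
have nm0 : (0 < n * m)%N by rewrite muln_gt0 n0.
have mong := qint_monic n0 m0.
set g := qint n m in mong *.
have [z pz] := C_prim_root_exists nm0.
set F := map_poly (intr : int -> algC) f.
set G := map_poly (intr : int -> algC) g.
have Xm0 : ('X^m - 1 : {poly algC}) != 0 by rewrite monic_neq0 // monicXnsubC.
have h1 : ('X^(n * m) - 1 : {poly algC}) %| F * ('X^m - 1).
  rewrite -(factor_Xn_sub_1 pz) -(big_map (fun i => z ^+ i) xpredT (fun x => 'X - x%:P)).
  apply: uniq_roots_dvdp.
    apply/allP => x /mapP [i _ ->]; rewrite rootM.
    case: (eqVneq ((z ^+ i) ^+ m) 1) => hm.
      by rewrite orbC /root !hornerE hm subrr eqxx.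
    apply/orP; left; rewrite /root -/(ev (z ^+ i) f) hz //.
    by rewrite -exprM mulnC exprM (prim_expr_order pz) expr1n.
  rewrite /index_iota subn0 uniq_rootsE map_inj_in_uniq ?iota_uniq // => i j.
  rewrite !mem_iota !add0n => /andP [_ hi] /andP [_ hj] /eqP.
  by rewrite (eq_prim_root_expr pz) !modn_small // => /eqP.
have h2 : G %| F.
  rewrite -(dvdp_mul2r _ _ Xm0).
  suff -> : G * ('X^m - 1) = 'X^(n * m) - 1 by [].
  have := congr1 (map_poly (intr : int -> algC)) (qint_mul n m).
  by rewrite rmorphM !rmorphB /= !map_polyXn rmorph1.
have hdec := Pdiv.RingMonic.rdivp_eq mong f.
set D := Pdiv.CommonRing.rdivp f g in hdec.
set R := Pdiv.CommonRing.rmodp f g in hdec.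
exists D.
suff R0 : R = 0 by rewrite hdec R0 addr0.
have g0 : g != 0 by rewrite monic_neq0.
have hs : (size R < size g)%N by rewrite Pdiv.Ring.ltn_rmodp.
have hR : G %| map_poly (intr : int -> algC) R.
  have -> : map_poly (intr : int -> algC) R = F - map_poly intr D * G.
    by rewrite /F {1}hdec rmorphD rmorphM /= addrC addKr.
  by rewrite dvdp_sub // dvdp_mull.
apply/eqP; apply: contraTT hs => R0.
have R0' : map_poly (intr : int -> algC) R != 0.
  by rewrite map_poly_eq0_id0 // intr_eq0 lead_coef_eq0.
have := dvdp_leq R0' hR.
rewrite /G !size_map_inj_poly //; try exact: intr_inj.
by rewrite leqNgt => /negbTE ->.
Qed.
Lemma mobius_sq p d : prime p -> (p ^ 2 %| d)%N -> (0 < d)%N -> mobius d = 0.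
Proof.
move=> pp hd d0; rewrite /mobius.
have -> : (d == 0%N) = false by apply/negbTE; rewrite -lt0n.
have pin : p \in primes d.
  by rewrite mem_primes pp d0 (dvdn_trans _ hd) // dvdn_exp.
case: allP => // /(_ p pin) /eqP h.
by move: hd; rewrite pfactor_dvdn // h.
Qed.

Lemma mobius_pmul p d : prime p -> ~~ (p %| d)%N -> (0 < d)%N ->
  mobius (p * d) = - mobius d.
Proof.
move=> pp hd d0.
have p0 := prime_gt0 pp.
have pd0 : (0 < p * d)%N by rewrite muln_gt0 p0.
have hperm : perm_eq (primes (p * d)) (p :: primes d).
  apply: uniq_perm; first exact: primes_uniq.
    by rewrite /= primes_uniq andbT mem_primes (negbTE hd) !andbF.
  move=> q; rewrite in_cons !mem_primes pd0 d0 /=.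
  case: (eqVneq q p) => [->|qp] /=; first by rewrite pp dvdn_mulr.
  case qq: (prime q) => //=.
  by rewrite Euclid_dvdM // dvdn_prime2 // (negbTE qp).
have hsize := perm_size hperm.
rewrite /mobius.
have -> : (d == 0%N) = false by apply/negbTE; rewrite -lt0n.
have -> : (p * d == 0%N) = false by apply/negbTE; rewrite -lt0n.
rewrite (perm_all _ hperm) hsize /= lognM //.
rewrite logn_prime // eqxx.
have -> : logn p d = 0%N by apply: logn_coprime; rewrite prime_coprime.
have -> : all (fun q => logn q (p * d) == 1%N) (primes d) =
          all (fun q => logn q d == 1%N) (primes d).
  apply: eq_in_all => q; rewrite mem_primes => /and3P [qq _ qd].
  rewrite lognM // logn_prime //.
  case: (eqVneq q p) => [qp|]; last by rewrite add0n.
  by move: hd; rewrite -qp qd.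
rewrite /=; case: ifP => _; rewrite ?oppr0 //.
by rewrite exprS mulN1r.
Qed.

Lemma mobius1 : mobius 1%N = 1.
Proof. by rewrite /mobius. Qed.

Lemma divisors_split (V : zmodType) p n (F : nat -> V) :
  prime p -> (p %| n)%N -> (0 < n)%N ->
  (forall d, (p ^ 2 %| d)%N -> F d = 0) ->
  \sum_(d <- divisors n) F d =
  \sum_(d <- divisors n | ~~ (p %| d)%N) (F d + F (p * d)%N).
Proof.
move=> pp pn n0 hF.
have p0 := prime_gt0 pp.
set D1 := [seq d <- divisors n | ~~ (p %| d)%N].
set D2 := [seq d <- divisors n | (p ^ 2 %| d)%N].
have sq (y : nat) : ~~ (p %| y)%N -> ~~ (p ^ 2 %| p * y)%N.
  by move=> hy; rewrite expnS expn1 dvdn_pmul2l.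
have hperm : perm_eq (divisors n) (D1 ++ map (muln p) D1 ++ D2).
  apply: uniq_perm; first exact: divisors_uniq.
    rewrite catA cat_uniq cat_uniq !filter_uniq ?divisors_uniq //=.
    rewrite map_inj_uniq ?filter_uniq ?divisors_uniq //; last by move=> a b /eqP; rewrite eqn_pmul2l // => /eqP.
    rewrite !andbT; apply/andP; split.
      by apply/hasPn => x /mapP [y _ ->]; rewrite mem_filter dvdn_mulr.
    apply/hasPn => x; rewrite mem_filter => /andP [h2 _].
    rewrite mem_cat negb_or mem_filter; apply/andP; split.
      by apply: contraL h2 => /andP [h _]; apply: contra h => h; rewrite (dvdn_trans _ h) // dvdn_exp.
    apply/mapP => [[y]]; rewrite mem_filter => /andP [hy _] hxy.
    by move: h2; rewrite hxy (negbTE (sq _ hy)).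
  move=> x; rewrite !mem_cat !mem_filter -!dvdn_divisors //.
  apply/idP/idP.
    move=> xn; case px: (p %| x)%N => /=; last by rewrite xn.
    case p2x: (p ^ 2 %| x)%N; first by rewrite xn !orbT.
    apply/orP; left; apply/mapP; exists (x %/ p)%N.
      rewrite mem_filter -dvdn_divisors //; apply/andP; split.
        apply: contraFN p2x => h.
        by rewrite -(divnK px) expnS expn1 mulnC dvdn_pmul2l.
      apply: dvdn_trans xn; apply/dvdnP; exists p; by rewrite mulnC divnK.
    by rewrite mulnC divnK.
  case/orP => [/andP [_ ->] //|]; case/orP => [|/andP [_ ->] //].
  case/mapP => y; rewrite mem_filter -dvdn_divisors // => /andP [hy yn] ->.
  by rewrite Gauss_dvd ?prime_coprime // pn yn.
rewrite (perm_big _ hperm) !big_cat /= big_map.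
rewrite [X in _ + (_ + X)]big1_seq ?addr0; last first.
  by move=> d; rewrite mem_filter => /andP [_ /andP [h _]]; apply: hF.
by rewrite -big_split /= big_filter.
Qed.
Lemma dir2 (S : nat -> Prop) (a : nat -> {poly int}) :
  (forall n m : nat, (0 < n)%N -> (forall p, prime p -> (p %| n)%N -> S p) ->
     (0 < m)%N -> coprime n m ->
     zpdvd (qint n m)
       (\sum_(d <- divisors n) (mobius d)%:P * subsq (a (n * m %/ d)%N) d)) ->
  (forall p m r : nat, S p -> prime p -> (0 < m)%N -> (0 < r)%N -> ~~ (p %| m)%N ->
     zpdvd (qint (p ^ r) m) (a (p ^ r * m)%N - subsq (a (p ^ r.-1 * m)%N) p)).
Proof.
move=> H p m r Sp pp m0 r0 pm.
have p0 := prime_gt0 pp.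
have pr0 : (0 < p ^ r)%N by rewrite expn_gt0 p0.
have := H (p ^ r)%N m pr0 _ m0 _.
have hS : forall q, prime q -> (q %| p ^ r)%N -> S q.
  move=> q qq; rewrite Euclid_dvdX // r0 andbT dvdn_prime2 // => /eqP -> //.
have hc : coprime (p ^ r)%N m by rewrite coprimeXl // prime_coprime.
move=> /(_ hS hc).
rewrite (@divisors_split _ p (p ^ r)%N _ pp) ?dvdn_exp //; last first.
  move=> d hd; case: (posnP d) => [->|d0]; first by rewrite mul0r.
  by rewrite (mobius_sq pp hd d0) mul0r.
rewrite -big_filter.
have -> : [seq d <- divisors (p ^ r)%N | ~~ (p %| d)%N] = [:: 1%N].
  apply: (@irr_sorted_eq _ ltn ltn_trans).
  - by move=> ? /=; rewrite ltnn.
  - apply: sorted_filter; [exact: ltn_trans | exact: sorted_divisors_ltn].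
  - by [].
  move=> d; rewrite mem_filter -dvdn_divisors // inE.
  apply/idP/idP.
    case/andP => hpd /(dvdn_pfactor _ _ pp) [k _ hk].
    by move: hpd; rewrite hk; case: k {hk} => // k; rewrite expnS dvdn_mulr.
  by move/eqP ->; rewrite dvd1n andbT dvdn1 neq_ltn prime_gt1 // orbT.
rewrite big_cons big_nil addr0 /=.
have m1 : mobius 1%N = 1 by [].
rewrite m1 (@mobius_pmul p 1%N) ?dvdn1 ?neq_ltn ?prime_gt1 ?orbT // m1.
rewrite mul1r polyCN mulNr mul1r muln1 divn1 /subsq expr1 comp_polyXr.
have -> : ((p ^ r * m) %/ p = p ^ r.-1 * m)%N.
  by rewrite -(prednK r0) expnS -mulnA mulKn.
by [].
Qed.


Lemma dir1 (S : nat -> Prop) (a : nat -> {poly int}) :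
  (forall p m r : nat, S p -> (0 < m)%N -> (0 < r)%N -> ~~ (p %| m)%N ->
     zpdvd (qint (p ^ r) m) (a (p ^ r * m)%N - subsq (a (p ^ r.-1 * m)%N) p)) ->
  (forall n m : nat, (0 < n)%N -> (forall p, prime p -> (p %| n)%N -> S p) ->
     (0 < m)%N -> coprime n m ->
     zpdvd (qint n m)
       (\sum_(d <- divisors n) (mobius d)%:P * subsq (a (n * m %/ d)%N) d)).
Proof.
move=> H n m n0 hS m0 cop.
apply: ev_zpdvd => // z hz1 hzm.
have nm0 : (0 < n * m)%N by rewrite muln_gt0 n0.
have [k pk kd] := prim_order_exists nm0 hz1.
have km : ~~ (k %| m)%N by rewrite (prim_order_dvd pk).
have g1 : (1 < gcdn k n)%N.
  rewrite ltnNge; apply: contra km => hg.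
  have : coprime k n.
    by rewrite /coprime eqn_leq hg gcdn_gt0 n0 orbT.
  by move=> c; rewrite -(Gauss_dvdr _ c).
set p := pdiv (gcdn k n).
have pp : prime p by apply: pdiv_prime.
have pk' : (p %| k)%N by apply: dvdn_trans (pdiv_dvd _) (dvdn_gcdl _ _).
have pn : (p %| n)%N by apply: dvdn_trans (pdiv_dvd _) (dvdn_gcdr _ _).
have p0 := prime_gt0 pp.
have pm : ~~ (p %| m)%N.
  apply/negP => h; have := coprime_dvdl pn cop.
  by rewrite prime_coprime // h.
have [n' cn' hn] := pfactor_coprime pp n0.
set r := logn p n in hn.
have r0 : (0 < r)%N by rewrite logn_gt0 mem_primes pp n0 pn.
rewrite ev_sum (@divisors_split _ p n _ pp pn n0); last first.
  move=> d hd; rewrite evM evC; case: (posnP d) => [->|d0]; first by rewrite mul0r.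
  by rewrite (mobius_sq pp hd d0) mul0r.
apply: big1_seq => d /andP [pd]; rewrite -dvdn_divisors // => dn.
have d0 : (0 < d)%N by apply: dvdn_gt0 dn.
rewrite !evM !evC !ev_subsq mobius_pmul // intrN mulNr -mulrBr.
have dn' : (d %| n')%N.
  have cd : coprime d (p ^ r) by rewrite coprime_sym coprimeXl // prime_coprime.
  by rewrite -(Gauss_dvdl _ cd) -hn.
have [e he] : exists e, n' = (e * d)%N by exists (n' %/ d)%N; rewrite divnK.
have n'0 : (0 < n')%N by move: n0; rewrite hn muln_gt0 => /andP [].
have e0 : (0 < e)%N by move: n'0; rewrite he muln_gt0 => /andP [].
have pe : ~~ (p %| e)%N.
  by apply: contraL cn' => h; rewrite prime_coprime // he dvdn_mulr.
have pem : ~~ (p %| e * m)%N by rewrite Euclid_dvdM // negb_or pe.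
have hr := prednK r0.
have E1 : (n * m = (p ^ r * (e * m)) * d)%N.
  by rewrite hn he; lia.
have E2 : (n * m = (p ^ r.-1 * (e * m)) * (p * d))%N.
  by rewrite hn he -{1}hr expnS; lia.
have pd0 : (0 < p * d)%N by rewrite muln_gt0 p0.
rewrite {1}E1 mulnK // E2 mulnK //.
have := zpdvd_ev (z := z ^+ d) (H p (e * m)%N r (hS p pp pn) _ r0 pem).
rewrite muln_gt0 e0 m0 => /(_ isT).
rewrite -!exprM.
have -> : (d * (p ^ r * (e * m)) = n * m)%N by rewrite E1; lia.
have hne : z ^+ (d * (e * m)) != 1.
  rewrite -(prim_order_dvd pk); apply: contra pem => h.
  have : (p %| d * (e * m))%N by apply: dvdn_trans pk' h.
  by rewrite Euclid_dvdM // (negbTE pd) /=.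
move=> /(_ hz1 hne) /eqP; rewrite evB ev_subsq subr_eq0 -exprM (mulnC d p) => /eqP ->.
by rewrite subrr mulr0.
Qed.

Theorem theorem8 (S : nat -> Prop) (hSprime : forall p, S p -> prime p)
  (hSne : exists p, S p) (a : nat -> {poly int}) :
  (forall p m r : nat, S p -> (0 < m)%N -> (0 < r)%N -> ~~ (p %| m)%N ->
     zpdvd (qint (p ^ r) m) (a (p ^ r * m)%N - subsq (a (p ^ r.-1 * m)%N) p))
  <->
  (forall n m : nat, (0 < n)%N -> (forall p, prime p -> (p %| n)%N -> S p) ->
     (0 < m)%N -> coprime n m ->
     zpdvd (qint n m)
       (\sum_(d <- divisors n) (mobius d)%:P * subsq (a (n * m %/ d)%N) d)).
Proof.
split; first exact: dir1.
move=> H p m r Sp; exact: (dir2 H Sp (hSprime p Sp)).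
Qed.
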